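(* Let $G$ be a finite simple graph with $n$ vertices whose degrees, listed in non-decreasing order, are $d_1 \le d_2 \le \dots \le d_n$. Let $\lambda \ge 0$ be the largest integer such that $$\sum_{i=1}^{\lambda} \left\lceil \frac{d_i}{2} + 1 \right\rceil \le \sum_{i=\lambda+1}^{n} \left\lfloor \frac{d_i}{2} \right\rfloor,$$ where an empty sum (e.g. $\sum_{i=1}^{0}$) equals $0$. Then $\gamma_s(G) \ge n - 2\lambda$.
   Context: For a vertex $v$ of $G$, $N[v]$ denotes the closed neighbourhood of $v$ (i.e. $v$ together with its neighbours). A signed domination function of $G$ is a function $f: V(G) \to \{-1, 1\}$ such that $\sum_{x \in N[v]} f(x) \ge 1$ for every vertex $v \in V(G)$. The weight of $f$ is $f(V(G)) = \sum_{v \in V(G)} f(v)$. The signed domination number $\gamma_s(G)$ is the minimum weight of a signed domination function of $G$. *)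

(* Defs.v *)
From mathcomp Require Import all_boot all_order all_algebra.
Set Implicit Arguments. Unset Strict Implicit. Unset Printing Implicit Defensive.
Import Order.TTheory GRing.Theory Num.Theory.

Definition simple_graph (T : finType) (e : rel T) : Prop :=
  symmetric e /\ irreflexive e.

Definition deg (T : finType) (e : rel T) (v : T) : nat := #|[set u | e v u]|.

(* the degree sequence sorted non-decreasingly: d_1 <= ... <= d_n,
   with d_i = nth 0 (degseq e) i.-1 *)
Definition degseq (T : finType) (e : rel T) : seq nat :=
  sort leq [seq deg e v | v <- enum T].

Definition cnbhd (T : finType) (e : rel T) (v : T) : {set T} :=
  [set x | (x == v) || e v x].

(* a function V -> {-1,1} is encoded by f : {ffun T -> bool}, true |-> 1, false |-> -1 *)
Definition sgnb (b : bool) : int := if b then 1%R else (-1)%R.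

Definition weight (T : finType) (f : {ffun T -> bool}) : int :=
  (\sum_(v : T) sgnb (f v))%R.

Definition is_sdf (T : finType) (e : rel T) (f : {ffun T -> bool}) : bool :=
  [forall v : T, (1 <= \sum_(x in cnbhd e v) sgnb (f x))%R].

(* the all-ones function, which is always a signed domination function *)
Definition ones (T : finType) : {ffun T -> bool} := [ffun => true].

Definition gamma_s (T : finType) (e : rel T) : int :=
  weight (Order.arg_min (ones T) (fun f => is_sdf e f) (@weight T)).

(* the inequality defining lambda, with d_i := nth 0 ds i.-1:
   sum_{i=1}^{k} ceil(d_i/2 + 1) <= sum_{i=k+1}^{n} floor(d_i/2).
   For naturals d, ceil(d/2 + 1) = uphalf d + 1 and floor(d/2) = d./2. *)
Definition lambda_ok (ds : seq nat) (k : nat) : bool :=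
  (k <= size ds) &&
  (\sum_(1 <= i < k.+1) (uphalf (nth 0 ds i.-1) + 1)
     <= \sum_(k.+1 <= i < (size ds).+1) (nth 0 ds i.-1)./2).

(* Main.v *)
Require Import Defs.
From mathcomp Require Import all_boot all_order all_algebra zify.
Import Order.TTheory GRing.Theory Num.Theory.

Section Key.
Variable g : nat -> nat.
Hypothesis gmono : {homo g : x y / x <= y}.

Lemma take_shift (l : seq nat) (x : nat) (k : nat) :
  path leq x l -> k <= size l ->
  \sum_(y <- take k (x :: l)) g y <= \sum_(y <- take k l) g y.
Proof.
elim: l x k => [|y l IH] x [|k] //= Hp Hk.
rewrite !big_cons; move/andP: Hp => [Hxy Hp].
rewrite addnC [g y + _]addnC; apply: leq_add; last exact: gmono.
exact: IH.
Qed.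

Lemma key (ds t r : seq nat) : sorted leq ds -> perm_eq ds (t ++ r) ->
  \sum_(y <- take (size t) ds) g y <= \sum_(y <- t) g y.
Proof.
elim: ds t r => [|x ds IH] t r Hs Hp.
  by rewrite big_nil.
have Hx : x \in t ++ r by rewrite -(perm_mem Hp) mem_head.
have Hs' : sorted leq ds by exact: (path_sorted Hs).
rewrite mem_cat in Hx; case/orP: Hx => Hx'.
  have [t' Ht' Hpt] : exists2 t', perm_eq t (x :: t') & t' = rem x t.
    by exists (rem x t) => //; exact: perm_to_rem.
  rewrite (perm_size Ht') /= big_cons (perm_big _ Ht') big_cons leq_add2l.
  apply: (IH t' r Hs').
  have : perm_eq (x :: ds) (x :: t' ++ r).
    by apply: (perm_trans Hp); rewrite -cat_cons perm_cat2r.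
  by rewrite perm_cons.
have Ht : size t <= size ds.
  have := perm_size Hp; rewrite size_cat /=.
  have : 0 < size r by case: (r) Hx'.
  move=> Hr Hsz; rewrite -ltnS Hsz; rewrite -addn1 leq_add2l //.
apply: (leq_trans (take_shift _ _ _ Hs Ht)).
apply: (IH t (rem x r) Hs').
have : perm_eq (x :: ds) (x :: t ++ rem x r).
  have H1 : perm_eq (t ++ r) (t ++ x :: rem x r) by rewrite perm_cat2l perm_to_rem.
  apply: (perm_trans Hp (perm_trans H1 _)).
  by rewrite -cat1s perm_catCA.
by rewrite perm_cons.
Qed.
End Key.

Lemma conv1 (F : nat -> nat) (ds : seq nat) k : k <= size ds ->
  \sum_(1 <= i < k.+1) F (nth 0 ds i.-1) = \sum_(y <- take k ds) F y.
Proof.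
move=> Hk; rewrite big_add1 /= [RHS](big_nth 0) size_takel //.
by apply: eq_big_nat => i /andP [_ Hi]; rewrite nth_take.
Qed.

Lemma conv2 (F : nat -> nat) (ds : seq nat) k : k <= size ds ->
  \sum_(k.+1 <= i < (size ds).+1) F (nth 0 ds i.-1) = \sum_(y <- drop k ds) F y.
Proof.
move=> Hk; rewrite big_add1 /= [RHS](big_nth 0) size_drop.
rewrite -{1}[k]add0n big_addn.
by apply: eq_big_nat => i /andP [_ Hi]; rewrite nth_drop addnC.
Qed.

Lemma sum_take_drop (F : nat -> nat) (ds : seq nat) k :
  \sum_(y <- ds) F y = \sum_(y <- take k ds) F y + \sum_(y <- drop k ds) F y.
Proof. by rewrite -big_cat cat_take_drop. Qed.

Section G.
Variables (T : finType) (e : rel T) (f : {ffun T -> bool}).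
Hypothesis He : simple_graph e.
Let P := [set v | f v].
Let Nb v := [set u | e v u].

Lemma sum_sgn (A : {set T}) :
  (\sum_(x in A) sgnb (f x) = #|A :&: P|%:Z - #|A :\: P|%:Z)%R.
Proof.
rewrite (@big_setID _ _ _ _ A P) /=.
rewrite (eq_bigr (fun _ => 1%R)); last by move=> i; rewrite !inE => /andP [_ ->].
rewrite [X in (_ + X)%R](eq_bigr (fun _ => (-1)%R)); last first.
  by move=> i; rewrite !inE => /andP [/negbTE -> _].
by rewrite !sumr_const mulNrn !natz.
Qed.

Lemma cn_eq v : cnbhd e v = v |: Nb v.
Proof. by apply/setP => x; rewrite !inE. Qed.

Lemma v_notin v : v \notin Nb v.
Proof. by rewrite inE (proj2 He). Qed.

Lemma deg_split v : deg e v = #|Nb v :&: P| + #|Nb v :\: P|.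
Proof. by rewrite cardsID. Qed.

Lemma sdf_local v : is_sdf e f ->
  (1 <= sgnb (f v) + (#|Nb v :&: P|%:Z - #|Nb v :\: P|%:Z))%R.
Proof.
move=> /forallP /(_ v); rewrite cn_eq big_setU1 ?v_notin //= sum_sgn //.
Qed.

Lemma minus_bound v : is_sdf e f -> ~~ f v -> uphalf (deg e v) + 1 <= #|Nb v :&: P|.
Proof.
move=> H Hv; have := sdf_local v H; rewrite (negbTE Hv) /= deg_split.
move: #|Nb v :&: P| #|Nb v :\: P| => p m Hi.
have : (m + 2 <= p)%N by lia.
lia.
Qed.

Lemma plus_bound v : is_sdf e f -> f v -> #|Nb v :\: P| <= (deg e v)./2.
Proof.
move=> H Hv; have := sdf_local v H; rewrite Hv /= deg_split.
move: #|Nb v :&: P| #|Nb v :\: P| => p m Hi.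
have : (m <= p)%N by lia.
lia.
Qed.

Lemma card_sum (A B : {set T}) v : #|Nb v :&: A| = \sum_(u in A) (e v u : nat).
Proof.
rewrite -sum1_card big_mkcond [RHS]big_mkcond /=.
by apply: eq_bigr => u _; rewrite !inE; case: (e v u); case: (u \in A).
Qed.

Lemma double_count :
  \sum_(v in ~: P) #|Nb v :&: P| = \sum_(u in P) #|Nb u :\: P|.
Proof.
under eq_bigr do rewrite (card_sum P P).
rewrite exchange_big /=; apply: eq_bigr => u _.
rewrite setDE (card_sum (~: P) P); apply: eq_bigr => v _.
by rewrite (proj1 He).
Qed.
End G.

Lemma ones_sdf (T : finType) (e : rel T) : is_sdf e (ones T).
Proof.
apply/forallP => v.
rewrite (eq_bigr (fun _ => 1%R)); last by move=> i _; rewrite ffunE.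
rewrite sumr_const natz lez_nat card_gt0; apply/set0Pn; exists v.
by rewrite !inE eqxx.
Qed.

Lemma lam_ok_M (T : finType) (e : rel T) (f : {ffun T -> bool}) :
  simple_graph e -> is_sdf e f -> lambda_ok (degseq e) #|~: [set v | f v]|.
Proof.
move=> He Hf.
set M := ~: [set v | f v]; set k := #|M|; set ds := degseq e.
have Hsz : size ds = #|T| by rewrite /ds /degseq size_sort size_map cardT.
have Hk : k <= size ds by rewrite Hsz max_card.
set t := [seq deg e v | v <- enum M].
set r := [seq deg e v | v <- enum (~: M)].
have Hperm : perm_eq ds (t ++ r).
  rewrite /ds /degseq perm_sort -map_cat; apply: perm_map.
  apply: uniq_perm; first exact: enum_uniq.
    rewrite cat_uniq !enum_uniq /= andbT; apply/hasPn => x.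
    by rewrite !mem_enum inE => ->.
  by move=> x; rewrite mem_cat !mem_enum !inE; case: (f x).
have Hst : size t = k by rewrite size_map /k cardE.
have Hsort : sorted leq ds by apply: sort_sorted; exact: leq_total.
have Hsum : forall G : nat -> nat, \sum_(y <- t) G y = \sum_(v in M) G (deg e v).
  by move=> G; rewrite big_map big_enum.
have Hsumr : forall G : nat -> nat, \sum_(y <- r) G y = \sum_(v in ~: M) G (deg e v).
  by move=> G; rewrite big_map big_enum.
have M1 : {homo (fun y => uphalf y + 1) : x y / x <= y}.
  by move=> x y Hxy; rewrite leq_add2r uphalf_leq.
have M2 : {homo (fun y => y./2) : x y / x <= y} by move=> x y; exact: half_leq.
have K1 := @key _ M1 _ _ _ Hsort Hperm.
have K2 := @key _ M2 _ _ _ Hsort Hperm.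
rewrite Hst in K1 K2.
have Htot : \sum_(y <- ds) y./2 = \sum_(y <- t) y./2 + \sum_(y <- r) y./2.
  by rewrite (perm_big _ Hperm) big_cat.
have Chain : \sum_(v in M) (uphalf (deg e v) + 1) <= \sum_(v in ~: M) (deg e v)./2.
  apply: (@leq_trans (\sum_(v in M) #|[set u | e v u] :&: [set v | f v]|)).
    apply: leq_sum => v; rewrite inE => Hv.
    by apply: (minus_bound _ _ _ He v Hf); rewrite inE in Hv.
  have DC := double_count _ _ f He; rewrite /= in DC; rewrite /M DC setCK.
  apply: leq_sum => v; rewrite inE => Hv.
  by apply: (plus_bound _ _ _ He v Hf).
apply/andP; split => //.
rewrite (conv1 (fun y => uphalf y + 1) _ _ Hk) (conv2 (fun y => y./2) _ _ Hk).
rewrite Hsum in K1 K2; rewrite Hsumr in Htot.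
rewrite (sum_take_drop _ _ k) in Htot.
lia.
Qed.

Theorem theorem6 (T : finType) (e : rel T) (lam : nat) :
  simple_graph e ->
  lambda_ok (degseq e) lam ->
  (forall k : nat, lambda_ok (degseq e) k -> k <= lam) ->
  ((#|T| : int) - 2%:Z * (lam : int) <= gamma_s e)%R.
Proof.
move=> He _ Hmax.
rewrite /gamma_s; case: (arg_minP (@weight T) (ones_sdf _ e)) => f Hf _.
have Hk := Hmax _ (lam_ok_M _ _ _ He Hf).
have Hc := cardsC [set v | f v].
have W : weight f = (\sum_(x in [set: T]) sgnb (f x))%R by apply: eq_bigl => x; rewrite inE.
rewrite W sum_sgn setTI setTD.
move: Hk Hc; move: #|[set v | f v]| #|~: [set v | f v]| #|T| => a b n Hk Hc. lia.
Qed.
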